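(* Let $G$ be a finite group, $k$ a field of characteristic $p$, and $V$ an absolutely $p$-divisible permutation $kG$-module. (a) If $M$ is a $V$-projective $kG$-module, then $M$ is $V(\mathcal{F}_G)$-projective. (b) If $C$ is a $V$-endosplit-trivial complex of $kG$-modules, then $C$ is $V(\mathcal{F}_G)$-endosplit-trivial.
   Context: A $kG$-module $V$ is absolutely $p$-divisible if every indecomposable direct summand of $V$ has $k$-dimension divisible by $p$. For a $kG$-module $V$, a $kG$-module $M$ is $V$-projective if $M$ is isomorphic to a direct summand of $V\otimes_kN$ for some $kG$-module $N$. $V(\mathcal{F}_G)=\bigoplus_{Q\in s_p(G)\setminus\mathrm{Syl}_p(G)}k[G/Q]$, where $s_p(G)$ is the set of $p$-subgroups and $\mathrm{Syl}_p(G)$ the Sylow $p$-subgroups. A bounded complex $C$ of $p$-permutation $kG$-modules (finitely generated direct summands of permutation modules) is $V$-endosplit-trivial if $C^*\otimes_kC\simeq(k\oplus M)[0]$ in the homotopy category, where $C^*=\operatorname{Hom}_k(C,k)$, $M[0]$ denotes $M$ in degree $0$, and $M$ is a $V$-projective $kG$-module. *)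

(* Defs.v *)
(* Finite-dimensional kG-modules are matrix representations
   (row-vector convention: g acts by v |-> v *m rG g). *)
From HB Require Import structures.
From mathcomp Require Import all_boot all_order all_algebra all_fingroup all_solvable.
From mathcomp Require Import mxrepresentation character.
Set Implicit Arguments. Unset Strict Implicit. Unset Printing Implicit Defensive.
Import GRing.Theory.
Local Open Scope ring_scope.

Section Modules.
Variables (F : fieldType) (gT : finGroupType) (G : {group gT}).
Local Notation reprG := (mx_representation F G).

Definition mx_summand n (rX : reprG n) (U : 'M[F]_n) : Prop :=
  mxmodule rX U /\
  exists2 W : 'M[F]_n, mxmodule rX W & (mxdirect (U + W) /\ (U + W :=: 1%:M)%MS)%MS.

Definition iso_summand n (rX : reprG n) m (rM : reprG m) : Prop :=
  exists U : 'M[F]_n, exists modU : mxmodule rX U,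
    mx_summand rX U /\ mx_rsim (submod_repr modU) rM.

Definition mx_indecomposable n (rX : reprG n) (U : 'M[F]_n) : Prop :=
  U != 0 /\
  forall U1 U2 : 'M[F]_n, mxmodule rX U1 -> mxmodule rX U2 ->
    (mxdirect (U1 + U2))%MS -> (U1 + U2 :=: U)%MS ->
    U1 == 0 \/ U2 == 0.

Definition abs_p_divisible (p : nat) n (rV : reprG n) : Prop :=
  forall U : 'M[F]_n, mx_summand rV U -> mx_indecomposable rV U ->
    (p %| \rank U)%N.

(* permutation module: has a basis (rows of B) permuted by G *)
Definition perm_module n (rV : reprG n) : Prop :=
  exists2 B : 'M[F]_n, B \in unitmx &
    {in G, forall x, is_perm_mx (B *m rV x *m invmx B)}.

Definition p_perm_module m (rM : reprG m) : Prop :=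
  exists n, exists rP : reprG n, perm_module rP /\ iso_summand rP rM.

Definition V_projective n (rV : reprG n) m (rM : reprG m) : Prop :=
  exists n', exists rN : reprG n', iso_summand (prod_repr rV rN) rM.

Lemma triv_mx_repr : mx_repr G (fun _ : gT => 1%:M : 'M[F]_1).
Proof. by split=> // x y _ _; rewrite mulmx1. Qed.
Definition triv_repr := MxRepresentation triv_mx_repr.

Lemma dual_mx_repr n (rV : reprG n) : mx_repr G (fun x => (rV (x^-1)%g)^T).
Proof.
split=> [|x y Gx Gy]; first by rewrite invg1 repr_mx1 trmx1.
by rewrite invMg repr_mxM ?groupV // trmx_mul.
Qed.
Definition dual_repr n (rV : reprG n) := MxRepresentation (dual_mx_repr rV).

Section PermSet.
Variables (T : finType) (X : {set T}) (act : T -> gT -> T).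
Hypotheses (act1 : {in X, forall a, act a 1%g = a})
           (actM : {in X & G & G, forall a x y, act a (x * y)%g = act (act a x) y})
           (actX : {in X & G, forall a x, act a x \in X}).

Definition pset_mx (x : gT) : 'M[F]_#|X| :=
  \matrix_(i, j) ((act (enum_val i) x == enum_val j)%:R).

Lemma pset_mx_repr : mx_repr G pset_mx.
Proof.
split=> [|x y Gx Gy].
  apply/matrixP=> i j; rewrite !mxE act1 ?enum_valP //.
  by rewrite (inj_eq enum_val_inj).
apply/matrixP=> i j; rewrite !mxE.
have Xa : act (enum_val i) x \in X by apply: actX; rewrite ?enum_valP.
rewrite (bigD1 (enum_rank_in Xa (act (enum_val i) x))) //= !mxE.
rewrite enum_rankK_in // eqxx mul1r big1 ?addr0.
  by rewrite actM ?enum_valP.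
move=> k nk; rewrite !mxE.
case: eqP => [e|]; last by rewrite mul0r.
by case/eqP: nk; apply: enum_val_inj; rewrite -e enum_rankK_in.
Qed.

Definition pset_repr := MxRepresentation pset_mx_repr.
End PermSet.

(* The G-set of pairs (Q, Qg) with Q a non-Sylow p-subgroup of G and Qg a
   (right) coset of Q in G: its permutation module is
   V(F_G) = \bigoplus_{Q in s_p(G) \ Syl_p(G)} k[G/Q]. *)
Definition VF_set (p : nat) : {set {set gT} * {set gT}} :=
  [set QC | [&& group_set QC.1, QC.1 \subset G, (p.-group QC.1)%g,
               ~~ (p.-Sylow(G) QC.1)%g & QC.2 \in rcosets QC.1 G]].

Definition VF_act (QC : {set gT} * {set gT}) (x : gT) := (QC.1, (QC.2 :* x)%g).

Lemma VF_act1 p : {in VF_set p, forall a, VF_act a 1%g = a}.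
Proof. by case=> Q C _; rewrite /VF_act /= rcoset1. Qed.

Lemma VF_actM p :
  {in VF_set p & G & G, forall a x y, VF_act a (x * y)%g = VF_act (VF_act a x) y}.
Proof. by case=> Q C x y _ _ _; rewrite /VF_act /= rcosetM. Qed.

Lemma VF_actX p : {in VF_set p & G, forall a x, VF_act a x \in VF_set p}.
Proof.
case=> Q C x; rewrite !inE /= => /and5P[gQ sQG pQ nS /rcosetsP[g Gg ->]] Gx.
rewrite gQ sQG pQ nS /=; apply/rcosetsP; exists (g * x)%g; first exact: groupM.
by rewrite rcosetM.
Qed.

Definition VFG (p : nat) :=
  pset_repr (@VF_act1 p) (@VF_actM p) (@VF_actX p).

(* Bounded complexes of kG-modules, encoded as a graded module: a module
   with a basis, a degree for each basis vector (indexed by nat, only the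
   values below cdim matter), G preserving degrees, and a G-equivariant
   differential of degree +1 with d^2 = 0. *)
Record cplx := Cplx {
  cdim : nat;
  crep : reprG cdim;
  cdeg : nat -> int;
  cdif : 'M[F]_cdim }.

Definition is_complex (C : cplx) : Prop :=
  [/\ {in G, forall x, forall i j : 'I_(cdim C),
          crep C x i j != 0 -> cdeg C i = cdeg C j},
      forall i j : 'I_(cdim C), cdif C i j != 0 -> cdeg C j = (cdeg C i + 1)%R,
      {in G, forall x, crep C x *m cdif C = cdif C *m crep C x}
    & cdif C *m cdif C = 0].

(* the degree-z term C^z, as the span of the basis vectors of degree z *)
Definition cpiece (C : cplx) (z : int) : 'M[F]_(cdim C) :=
  \matrix_(i, j) ((i == j) && (cdeg C i == z))%:R.

Definition p_perm_complex (C : cplx) : Prop :=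
  is_complex C /\
  forall z (modz : mxmodule (crep C) (cpiece C z)), p_perm_module (submod_repr modz).

Definition cdual (C : cplx) : cplx :=
  @Cplx (cdim C) (dual_repr (crep C)) (fun k => - cdeg C k) (cdif C)^T.

Definition ctens (C D : cplx) : cplx :=
  let dg k := (cdeg C (k %/ cdim D) + cdeg D (k %% cdim D))%R in
  let sgn : 'M[F]_(cdim C * cdim D) :=
    \matrix_(k, l) ((k == l)%:R * (-1) ^+ `|cdeg C (k %/ cdim D)|%N) in
  @Cplx (cdim C * cdim D) (prod_repr (crep C) (crep D)) dg
        (tprod (cdif C) (1%:M : 'M_(cdim D))
         + sgn *m tprod (1%:M : 'M_(cdim C)) (cdif D)).

Definition chain_map (C D : cplx) (f : 'M[F]_(cdim C, cdim D)) : Prop :=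
  [/\ {in G, forall x, crep C x *m f = f *m crep D x},
      forall i j, f i j != 0 -> cdeg D j = cdeg C i
    & cdif C *m f = f *m cdif D].

Definition homotopic (C D : cplx) (f g : 'M[F]_(cdim C, cdim D)) : Prop :=
  exists h : 'M[F]_(cdim C, cdim D),
    [/\ {in G, forall x, crep C x *m h = h *m crep D x},
        forall i j, h i j != 0 -> (cdeg D j + 1)%R = cdeg C i
      & f - g = cdif C *m h + h *m cdif D].

Definition htpy_equiv (C D : cplx) : Prop :=
  exists f, exists g,
    [/\ @chain_map C D f, @chain_map D C g,
        @homotopic C C (f *m g) 1%:M & @homotopic D D (g *m f) 1%:M].

Definition endosplit_trivial n (rV : reprG n) (C : cplx) : Prop :=
  p_perm_complex C /\
  exists D : cplx,
    [/\ is_complex D, forall i, (i < cdim D)%N -> cdeg D i = 0,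
        htpy_equiv (ctens (cdual C) C) D &
        exists U : 'M[F]_(cdim D), exists W : 'M[F]_(cdim D),
        exists modU : mxmodule (crep D) U, exists modW : mxmodule (crep D) W,
          [/\ (mxdirect (U + W))%MS, (U + W :=: 1%:M)%MS,
              mx_rsim (submod_repr modU) triv_repr
            & V_projective rV (submod_repr modW)]].

End Modules.

(* Main.v *)
Require Import Defs.
From HB Require Import structures.
From mathcomp Require Import all_boot all_order all_algebra all_fingroup all_solvable.
From mathcomp Require Import mxrepresentation character zify.

Module MPartA.
Set Implicit Arguments. Unset Strict Implicit. Unset Printing Implicit Defensive.
Import GRing.Theory.
Local Open Scope ring_scope.

Section HSum.
Variables (F : fieldType) (gT : finGroupType) (G : {group gT}).
Local Notation reprG := (mx_representation F G).

Definition hsum m (rM : reprG m) n (rX : reprG n) : Prop :=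
  exists f : 'M[F]_(m, n), exists g : 'M[F]_(n, m),
    [/\ {in G, forall x, rM x *m f = f *m rX x},
        {in G, forall x, rX x *m g = g *m rM x} & f *m g = 1%:M].

Lemma mulmx1C_cast k m (B : 'M[F]_(k, m)) (B' : 'M[F]_(m, k)) :
  k = m -> B *m B' = 1%:M -> B' *m B = 1%:M.
Proof. by move=> e; subst k; apply: mulmx1C. Qed.

Lemma proj_mx_comm n (rX : reprG n) (U W : 'M[F]_n) x :
  mxmodule rX U -> mxmodule rX W -> (U :&: W = 0)%MS -> (U + W :=: 1%:M)%MS ->
  x \in G -> rX x *m proj_mx U W = proj_mx U W *m rX x.
Proof.
move=> mU mW dx full Gx; set P := proj_mx U W.
have sPU : (P <= U)%MS by rewrite -[P]mul1mx proj_mx_sub.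
have sQW : (1%:M - P <= W)%MS.
  by rewrite -[P]mul1mx proj_mx_compl_sub // full.
have e1 : (P *m rX x) *m P = P *m rX x.
  by rewrite proj_mx_id // (mxmodule_trans mU Gx sPU).
have e2 : ((1%:M - P) *m rX x) *m P = 0.
  by rewrite proj_mx_0 // (mxmodule_trans mW Gx sQW).
have h : rX x = P *m rX x + (1%:M - P) *m rX x.
  by rewrite -mulmxDl addrC subrK mul1mx.
by rewrite {1}h (mulmxDl (P *m rX x)) e1 e2 addr0.
Qed.

Lemma iso_summand_hsum n (rX : reprG n) m (rM : reprG m) :
  iso_summand rX rM -> hsum rM rX.
Proof.
case=> U [modU [[_ [W modW [dx full]]] [B eqd freeB eqB]]].
have dx' : (U :&: W = 0)%MS by apply/mxdirect_addsP.
have eqB' : forall x, x \in G -> submod_mx modU x *m B = B *m rM x := eqB.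
case/row_freeP: freeB => B' BB'.
have B'B := mulmx1C_cast eqd BB'.
set P := proj_mx U W.
exists (B' *m val_submod 1%:M), (in_submod U P *m B); split.
- move=> x Gx.
  have h : B' *m submod_repr modU x = rM x *m B'.
    rewrite -[LHS]mulmx1 -BB' mulmxA -(mulmxA B') eqB //.
    by rewrite mulmxA B'B mul1mx.
  rewrite mulmxA -h -mulmxA /=.
  rewrite -{1}[submod_mx modU x]mul1mx.
  by rewrite -mulmxA -val_submodE (val_submodJ modU) // /val_submod /= !mul1mx.
- move=> x Gx.
  rewrite mulmxA in_submodE mulmxA (proj_mx_comm modU modW dx' full Gx).
  rewrite -(in_submodE U (P *m rX x)) (in_submodJ modU); last by rewrite -[P]mul1mx proj_mx_sub.
  by rewrite -(mulmxA (in_submod U P)) eqB' // in_submodE !mulmxA.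
- have key : val_submod 1%:M *m in_submod U P = 1%:M.
    rewrite in_submodE mulmxA proj_mx_id ?val_submodP //.
    by rewrite -in_submodE val_submodK.
  by rewrite mulmxA -(mulmxA B') key mulmx1 B'B.
Qed.

Lemma hsum_iso_summand n (rX : reprG n) m (rM : reprG m) :
  hsum rM rX -> iso_summand rX rM.
Proof.
case=> f [g [ef eg fg]].
set e := g *m f.
have ee : e *m e = e by rewrite /e mulmxA -(mulmxA g) fg mulmx1.
have ce : {in G, forall x, rX x *m e = e *m rX x}.
  by move=> x Gx; rewrite /e mulmxA eg // -(mulmxA g (rM x)) ef // mulmxA.
have modU : mxmodule rX e.
  by apply/mxmoduleP=> x Gx; rewrite -ce // submxMl.
have modW : mxmodule rX (1%:M - e).
  apply/mxmoduleP=> x Gx.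
  by rewrite mulmxBl mul1mx -ce // -[X in X - _]mulmx1 -mulmxBr submxMl.
exists e, modU; split.
  split=> //; exists (1%:M - e) => //; split.
    apply/mxdirect_addsP; apply/eqP; rewrite -submx0.
    set K := (e :&: (1%:M - e))%MS.
    have [/submxP [D1 h1] /submxP [D2 h2]] : (K <= e)%MS /\ (K <= 1%:M - e)%MS.
      by split; [apply: capmxSl | apply: capmxSr].
    have : K *m e = K by rewrite h1 -mulmxA ee.
    rewrite {1}h2 -mulmxA mulmxBl mul1mx ee subrr mulmx0 => <-.
    by rewrite sub0mx.
  apply/eqmxP; rewrite submx1 /=.
  by rewrite -{1}(subrK e 1%:M) addrC addmx_sub_adds.
have rke : \rank e = m.
  apply/eqP; rewrite eqn_leq; apply/andP; split.
    by apply: leq_trans (mxrankM_maxl _ _) (rank_leq_col g).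
  have : f *m e *m g = 1%:M by rewrite /e !mulmxA fg mul1mx fg.
  move=> h; rewrite -{1}(mxrank1 F m) -h.
  by apply: leq_trans (mxrankM_maxl _ _) (mxrankM_maxr _ _).
have rbe : row_base e *m e = row_base e.
  have /submxP [D ->] : (row_base e <= e)%MS by rewrite eq_row_base.
  by rewrite -mulmxA ee.
exists (row_base e *m g) => //.
- rewrite /row_free; apply/eqP/anti_leq/andP; split; first exact: rank_leq_row.
  have : \rank (row_base e *m g *m f) = \rank e.
    by rewrite -mulmxA -/e rbe (eq_row_base e).
  by move=> h; rewrite -[X in (X <= _)%N]h; apply: mxrankM_maxl.
- move=> x Gx /=.
  rewrite mulmxA.
  change (submod_mx modU x *m row_base e) with (val_submod (submod_mx modU x)).
  rewrite -{1}[submod_mx modU x]mul1mx val_submodJ //.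
  by rewrite /val_submod /= mul1mx -(mulmxA (row_base e) (rX x)) eg // mulmxA.
Qed.

Lemma hsum_trans m (rA : reprG m) n (rB : reprG n) k (rC : reprG k) :
  hsum rA rB -> hsum rB rC -> hsum rA rC.
Proof.
case=> f [g [ef eg fg]] [f' [g' [ef' eg' fg']]].
exists (f *m f'), (g' *m g); split.
- by move=> x Gx; rewrite mulmxA ef // -(mulmxA f (rB x)) ef' // mulmxA.
- by move=> x Gx; rewrite mulmxA eg' // -(mulmxA g' (rB x)) eg // mulmxA.
- by rewrite -mulmxA (mulmxA f') fg' mul1mx.
Qed.

Lemma hsum_tens m (rA : reprG m) n (rB : reprG n) k (rC : reprG k) :
  hsum rA rB -> hsum (prod_repr rA rC) (prod_repr rB rC).
Proof.
case=> f [g [ef eg fg]].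
exists (tprod f 1%:M), (tprod g 1%:M); split.
- by move=> x Gx /=; rewrite -!tprodE ef // mulmx1 mul1mx.
- by move=> x Gx /=; rewrite -!tprodE eg // mulmx1 mul1mx.
- by rewrite -tprodE fg mulmx1 tprod1.
Qed.

Lemma idem_summand n (rX : reprG n) (e : 'M[F]_n) :
  e *m e = e -> {in G, forall x, rX x *m e = e *m rX x} -> mx_summand rX e.
Proof.
move=> ee ce.
have modU : mxmodule rX e.
  by apply/mxmoduleP=> x Gx; rewrite -ce // submxMl.
have modW : mxmodule rX (1%:M - e).
  apply/mxmoduleP=> x Gx.
  by rewrite mulmxBl mul1mx -ce // -[X in X - _]mulmx1 -mulmxBr submxMl.
split=> //; exists (1%:M - e) => //; split.
  apply/mxdirect_addsP; apply/eqP; rewrite -submx0.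
  set K := (e :&: (1%:M - e))%MS.
  have [/submxP [D1 h1] /submxP [D2 h2]] : (K <= e)%MS /\ (K <= 1%:M - e)%MS.
    by split; [apply: capmxSl | apply: capmxSr].
  have : K *m e = K by rewrite h1 -mulmxA ee.
  rewrite {1}h2 -mulmxA mulmxBl mul1mx ee subrr mulmx0 => <-.
  by rewrite sub0mx.
apply/eqmxP; rewrite submx1 /=.
by rewrite -{1}(subrK e 1%:M) addrC addmx_sub_adds.
Qed.

End HSum.

End MPartA.
Import MPartA.

Module MPartB.
Set Implicit Arguments. Unset Strict Implicit. Unset Printing Implicit Defensive.
Import GRing.Theory.
Local Open Scope ring_scope.

Lemma tidx_subproof m1 m2 (i : 'I_m1) (j : 'I_m2) : (i * m2 + j < m1 * m2)%N.
Proof. case: i j => i Hi [j Hj] /=; nia. Qed.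

Definition tidx m1 m2 (i : 'I_m1) (j : 'I_m2) : 'I_(m1 * m2) :=
  Ordinal (tidx_subproof i j).

Lemma trow_entry (F : fieldType) n1 (u : 'rV[F]_n1) m2 n2 (B : 'M[F]_(m2, n2))
    (i : 'I_m2) (j1 : 'I_n1) (j2 : 'I_n2) :
  trow u B i (tidx j1 j2) = u 0 j1 * B i j2.
Proof.
elim: n1 u j1 => [|n1 IH] u j1; first by case: j1.
have Hj2 := ltn_ord j2.
rewrite /= mxE; case: splitP => k /= hk.
  have j10 : j1 = lshift n1 (0 : 'I_1).
    apply: val_inj => /=; case: j1 hk => j1 /= Hj1; case: k => k Hk /= hk; nia.
  have kj2 : k = j2.
    apply: val_inj => /=; move: hk; rewrite j10 /=; lia.
  by rewrite mxE kj2 j10 !mxE.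
have j1pos : (0 < j1)%N.
  case: j1 hk => [[|j1] Hj1] /= hk //; case: k hk => k Hk /= hk; nia.
have Hj1' : (j1.-1 < n1)%N by move: (ltn_ord j1) j1pos; case: (nat_of_ord j1).
have kE : k = tidx (Ordinal Hj1') j2.
  apply: val_inj => /=; case: j1 j1pos hk Hj1' => [[|j1] Hj1] //= _ hk _; nia.
rewrite kE IH mxE; congr (u 0 _ * _); apply: val_inj => /=.
by case: j1 j1pos {hk Hj1' kE} => [[|j1] Hj1] //=.
Qed.

Lemma tprod_entry (F : fieldType) m1 n1 (A : 'M[F]_(m1, n1)) m2 n2 (B : 'M[F]_(m2, n2))
    (i1 : 'I_m1) (i2 : 'I_m2) (j1 : 'I_n1) (j2 : 'I_n2) :
  tprod A B (tidx i1 i2) (tidx j1 j2) = A i1 j1 * B i2 j2.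
Proof.
elim: m1 A i1 => [|m1 IH] A i1; first by case: i1.
have Hi2 := ltn_ord i2.
rewrite /= mxE; case: splitP => k /= hk.
  have i10 : i1 = lshift m1 (0 : 'I_1).
    apply: val_inj => /=; case: i1 hk => i1 /= Hi1; case: k => k Hk /= hk; nia.
  have ki2 : k = i2.
    apply: val_inj => /=; move: hk; rewrite i10 /=; lia.
  by rewrite ki2 trow_entry i10 !mxE.
have i1pos : (0 < i1)%N.
  case: i1 hk => [[|i1] Hi1] /= hk //; case: k hk => k Hk /= hk; nia.
have Hi1' : (i1.-1 < m1)%N by move: (ltn_ord i1) i1pos; case: (nat_of_ord i1).
have kE : k = tidx (Ordinal Hi1') i2.
  apply: val_inj => /=; case: i1 i1pos hk Hi1' => [[|i1] Hi1] //= _ hk _; nia.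
rewrite kE IH mxE; congr (A _ _ * _); apply: val_inj => /=.
by case: i1 i1pos {hk Hi1' kE} => [[|i1] Hi1] //=.
Qed.

Lemma tidx_div m1 m2 (k : 'I_(m1 * m2)) : (k %/ m2 < m1)%N.
Proof.
case: k => k /= Hk; case: m2 Hk => [|m2] Hk; first by rewrite muln0 in Hk.
by rewrite ltn_divLR.
Qed.

Lemma tidx_mod m1 m2 (k : 'I_(m1 * m2)) : (k %% m2 < m2)%N.
Proof.
case: k => k /= Hk; case: m2 Hk => [|m2] Hk; first by rewrite muln0 in Hk.
by rewrite ltn_mod.
Qed.

Definition untidx m1 m2 (k : 'I_(m1 * m2)) : 'I_m1 * 'I_m2 :=
  (Ordinal (tidx_div k), Ordinal (tidx_mod k)).

Lemma untidxK m1 m2 (k : 'I_(m1 * m2)) : tidx (untidx k).1 (untidx k).2 = k.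
Proof. by apply: val_inj => /=; rewrite -divn_eq. Qed.

Lemma tidxK m1 m2 (i : 'I_m1) (j : 'I_m2) : untidx (tidx i j) = (i, j).
Proof.
have Hj := ltn_ord j.
congr pair; apply: val_inj => /=.
  by rewrite divnMDl ?divn_small ?addn0 //; case: (nat_of_ord j) Hj => //; lia.
by rewrite modnMDl modn_small.
Qed.

Variant tidx_spec m1 m2 : 'I_(m1 * m2) -> Type :=
  TidxSpec (i : 'I_m1) (j : 'I_m2) : tidx_spec (tidx i j).

Lemma tidxP m1 m2 (k : 'I_(m1 * m2)) : tidx_spec k.
Proof. by rewrite -(untidxK k); constructor. Qed.

Lemma tidx_inj m1 m2 (i i' : 'I_m1) (j j' : 'I_m2) :
  (tidx i j == tidx i' j') = (i == i') && (j == j').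
Proof.
apply/eqP/andP => [e|[/eqP-> /eqP->]] //.
by have := tidxK i j; rewrite e tidxK => -[-> ->].
Qed.

Lemma big_tidx (F : fieldType) m1 m2 (f : 'I_(m1 * m2) -> F) :
  \sum_(k < m1 * m2) f k = \sum_(i < m1) \sum_(j < m2) f (tidx i j).
Proof.
rewrite pair_bigA /=.
rewrite (reindex (fun p : 'I_m1 * 'I_m2 => tidx p.1 p.2)) /=; last first.
  by exists (@untidx m1 m2) => [[i j]|k] _ /=; rewrite ?tidxK ?untidxK.
by apply: eq_bigr => -[i j].
Qed.

Lemma sum_pick (F : fieldType) (I : finType) (J : eqType) (h : I -> J)
    (f : I -> F) (k0 : I) (l : J) :
  injective h -> h k0 = l -> \sum_k f k * (h k == l)%:R = f k0.
Proof.
move=> hi e; rewrite (bigD1 k0) //= e eqxx mulr1 big1 ?addr0 //.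
move=> k nk; rewrite -e (inj_eq hi) (negbTE nk) mulr0 //.
Qed.

End MPartB.
Import MPartB.

Module MPartC.
Set Implicit Arguments. Unset Strict Implicit. Unset Printing Implicit Defensive.
Import GRing.Theory.
Local Open Scope ring_scope.

Lemma sum_delta (F : fieldType) (I : finType) (c : I) (f : I -> F) :
  \sum_l (c == l)%:R * f l = f c.
Proof.
rewrite (bigD1 c) //= eqxx mul1r big1 ?addr0 // => l nl.
by rewrite eq_sym (negbTE nl) mul0r.
Qed.

Definition assoc_idx a b c (k : 'I_(a * b * c)) : 'I_(a * (b * c)) :=
  tidx (untidx (untidx k).1).1 (tidx (untidx (untidx k).1).2 (untidx k).2).

Lemma assoc_idxE a b c (i : 'I_a) (j : 'I_b) (t : 'I_c) :
  assoc_idx (tidx (tidx i j) t) = tidx i (tidx j t).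
Proof. by rewrite /assoc_idx !tidxK. Qed.

Lemma assoc_idx_inj a b c : injective (@assoc_idx a b c).
Proof.
move=> k k'; case: (tidxP k) => ij t; case: (tidxP ij) => i j.
case: (tidxP k') => ij2 t'; case: (tidxP ij2) => i' j'.
rewrite !assoc_idxE => /eqP; rewrite !tidx_inj => /and3P[/eqP-> /eqP-> /eqP->].
by [].
Qed.

Section Assoc.
Variables (F : fieldType) (gT : finGroupType) (G : {group gT}).
Local Notation reprG := (mx_representation F G).

Lemma hsum_assoc a (rA : reprG a) b (rB : reprG b) c (rC : reprG c) :
  hsum (prod_repr (prod_repr rA rB) rC) (prod_repr rA (prod_repr rB rC)).
Proof.
pose f : 'M[F]_(a * b * c, a * (b * c)) :=
  \matrix_(k, l) (assoc_idx k == l)%:R.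
pose g : 'M[F]_(a * (b * c), a * b * c) :=
  \matrix_(l, k) (assoc_idx k == l)%:R.
exists f, g; split.
- move=> x Gx; apply/matrixP => k l.
  case: (tidxP k) => ij t; case: (tidxP ij) => i j.
  case: (tidxP l) => i' jt; case: (tidxP jt) => j' t'.
  rewrite !mxE.
  under eq_bigr do rewrite mxE.
  rewrite (sum_pick _ (k0 := tidx (tidx i' j') t') (@assoc_idx_inj a b c)) ?assoc_idxE //.
  under eq_bigr do rewrite mxE.
  rewrite sum_delta assoc_idxE /=.
  by rewrite !tprod_entry mulrA.
- move=> x Gx; apply/matrixP => l k.
  case: (tidxP k) => ij t; case: (tidxP ij) => i j.
  case: (tidxP l) => i' jt; case: (tidxP jt) => j' t'.
  rewrite !mxE.
  under eq_bigr do rewrite mxE.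
  under eq_bigr do rewrite mulrC.
  rewrite sum_delta assoc_idxE /=.
  under eq_bigr do rewrite mxE mulrC.
  rewrite (sum_pick _ (k0 := tidx (tidx i' j') t') (@assoc_idx_inj a b c)) ?assoc_idxE //.
  by rewrite !tprod_entry mulrA.
- apply/matrixP => k k'; rewrite !mxE.
  under eq_bigr do rewrite mxE.
  under eq_bigr do rewrite mxE.
  rewrite sum_delta eq_sym.
  by rewrite (inj_eq (@assoc_idx_inj a b c)).
Qed.

End Assoc.

End MPartC.
Import MPartC.

Module MPartD.
Set Implicit Arguments. Unset Strict Implicit. Unset Printing Implicit Defensive.
Import GRing.Theory.
Local Open Scope ring_scope.

Lemma perm_mx_entry (F : fieldType) n (s : {perm 'I_n}) i j :
  perm_mx s i j = (s i == j)%:R :> F.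
Proof. by rewrite /perm_mx !mxE. Qed.

Lemma perm_mx_inj (F : fieldType) n (s t : {perm 'I_n}) :
  perm_mx s = perm_mx t :> 'M[F]_n -> s = t.
Proof.
move=> e; apply/permP => i.
have h := congr1 (fun A : 'M[F]_n => A i (s i)) e.
move: h; rewrite /= !perm_mx_entry eqxx.
by case: (t i =P s i) => // _ /eqP; rewrite oner_eq0.
Qed.

Lemma sum_indicator (F : fieldType) (I : finType) (A : {pred I}) :
  \sum_i (i \in A)%:R = #|A|%:R :> F.
Proof.
rewrite -sum1_card natr_sum [RHS]big_mkcond /=.
by apply: eq_bigr => i _; case: (i \in A).
Qed.

Section Perm.
Variables (F : fieldType) (gT : finGroupType) (G : {group gT}).
Variables (n : nat) (rV : mx_representation F G n) (B : 'M[F]_n).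
Hypotheses (uB : B \in unitmx)
  (hB : {in G, forall x, is_perm_mx (B *m rV x *m invmx B)}).

Definition Pm x := B *m rV x *m invmx B.
Definition sperm x : {perm 'I_n} := odflt 1%g [pick s | Pm x == perm_mx s].

Lemma PmE x : x \in G -> Pm x = perm_mx (sperm x).
Proof.
move=> Gx; rewrite /sperm; case: pickP => [s /eqP //|none].
by have /existsP [s hs] := hB Gx; rewrite none in hs.
Qed.

Lemma PmM x y : x \in G -> y \in G -> Pm (x * y)%g = Pm x *m Pm y.
Proof.
move=> Gx Gy; rewrite /Pm repr_mxM // !mulmxA mulmxKV //.
Qed.

Lemma spermM x y : x \in G -> y \in G -> sperm (x * y)%g = (sperm x * sperm y)%g.
Proof.
move=> Gx Gy; apply: (@perm_mx_inj F).
by rewrite perm_mxM -!PmE ?groupM // PmM.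
Qed.

Definition pact (i : 'I_n) x := sperm x i.

Lemma pact_is_action : is_action G pact.
Proof.
split=> [x i j /= | i x y Gx Gy]; first exact: perm_inj.
by rewrite /pact spermM // permM.
Qed.

Definition pto := Action pact_is_action.
Arguments pto : simpl never.

Lemma PmEntry x i j : x \in G -> Pm x i j = (pto i x == j)%:R.
Proof. by move=> Gx; rewrite PmE // perm_mx_entry. Qed.

Lemma rVB x : x \in G -> rV x *m invmx B = invmx B *m Pm x.
Proof. by move=> Gx; rewrite /Pm !mulmxA mulVmx // mul1mx. Qed.

Lemma BrV x : x \in G -> Pm x *m B = B *m rV x.
Proof. by move=> Gx; rewrite /Pm mulmxKV. Qed.

Lemma rVE x : x \in G -> rV x = invmx B *m Pm x *m B.
Proof. by move=> Gx; rewrite /Pm !mulmxA mulVmx // mul1mx mulmxKV. Qed.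


Lemma pto_orbit x a i : x \in G -> (pto a x \in orbit pto G i) = (a \in orbit pto G i).
Proof. by move=> Gx; rewrite orbit_actr_in. Qed.

Lemma pto_inj x : injective (pto^~ x).
Proof. exact: act_inj. Qed.

Lemma pto_K x b : x \in G -> pto (pto b (x^-1)%g) x = b.
Proof. by move=> Gx; rewrite actKVin. Qed.

Variable p : nat.
Hypotheses (charFp : p \in [pchar F]) (habs : abs_p_divisible p rV).

Lemma orbit_pdiv i : (p %| #|orbit pto G i|)%N.
Proof.
apply/negPn/negP => ndiv.
set O := orbit pto G i.
have cO : (#|O|%:R : F) != 0 by rewrite -(dvdn_pcharf charFp).
pose u : 'rV[F]_n := \row_a ((a \in O)%:R).
pose w : 'rV[F]_n := (#|O|%:R)^-1 *: u.
pose pi := u^T *m w.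
have Pu : {in G, forall x, Pm x *m u^T = u^T}.
  move=> x Gx; apply/matrixP => a j; rewrite ord1 !mxE.
  under eq_bigr do rewrite PmEntry // !mxE.
  by rewrite sum_delta pto_orbit.
have uP : {in G, forall x, u *m Pm x = u}.
  move=> x Gx; apply/matrixP => j b; rewrite ord1 !mxE.
  under eq_bigr do rewrite PmEntry // !mxE.
  rewrite (sum_pick _ (k0 := pto b (x^-1)%g) (@pto_inj x)) ?pto_K //.
  by rewrite pto_orbit ?groupV.
have wu : w *m u^T = 1%:M.
  apply/matrixP => j k; rewrite !ord1 -scalemxAl !mxE.
  under eq_bigr do rewrite !mxE -natrM mulnb andbb.
  rewrite sum_indicator eqxx.
  by rewrite mulVf.
have pipi : pi *m pi = pi.
  by rewrite /pi mulmxA -(mulmxA u^T) wu mulmx1.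
have Ppi : {in G, forall x, Pm x *m pi = pi *m Pm x}.
  move=> x Gx; rewrite /pi mulmxA Pu // -mulmxA; congr (_ *m _).
  by rewrite /w -scalemxAl uP.
have iO : i \in O by apply: orbit_refl.
have pii : pi i i != 0.
  rewrite !mxE big_ord1 !mxE iO /= mul1r mulr1.
  by rewrite invr_eq0.
have rkpi : (\rank pi <= 1)%N := leq_trans (mxrankM_maxr _ _) (rank_leq_row w).
clearbody pi.
set e := invmx B *m pi *m B.
have ee : e *m e = e.
  by rewrite /e !mulmxA mulmxK // -(mulmxA (invmx B) pi pi) pipi.
have ce : {in G, forall x, rV x *m e = e *m rV x}.
  move=> x Gx; rewrite /e !mulmxA rVB // -(mulmxA (invmx B) (Pm x)) Ppi //.
  by rewrite -(mulmxA (invmx B *m pi) B (rV x)) -BrV // !mulmxA.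
have hsum := idem_summand ee ce.
have e0 : e != 0.
  apply/eqP => e0.
  have : pi = B *m e *m invmx B by rewrite /e !mulmxA mulmxV // mul1mx mulmxK.
  by rewrite e0 mulmx0 mul0mx => pi0; rewrite pi0 mxE eqxx in pii.
have rk1 : (\rank e <= 1)%N.
  apply: leq_trans (mxrankM_maxl _ _) _.
  by apply: leq_trans (mxrankM_maxr _ _) _.
have rke : \rank e = 1%N.
  by apply/eqP; rewrite eqn_leq rk1 lt0n mxrank_eq0.
have indec : mx_indecomposable rV e.
  split=> // U1 U2 _ _ dx eq12.
  move: dx; rewrite mxdirectE /= eq12 rke => /eqP h.
  rewrite -!mxrank_eq0.
  by case: (\rank U1) h => [|[|k]] //; case: (\rank U2) => [|[|k']] //; lia.
have := habs hsum indec; rewrite rke dvdn1 => /eqP p1.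
by have := pcharf_prime charFp; rewrite p1.
Qed.

End Perm.

End MPartD.
Import MPartD.

Module MPartE.
Set Implicit Arguments. Unset Strict Implicit. Unset Printing Implicit Defensive.
Import GRing.Theory.
Local Open Scope ring_scope.

Lemma trivn_mx_repr (F : fieldType) (gT : finGroupType) (G : {group gT}) m :
  mx_repr G (fun _ : gT => 1%:M : 'M[F]_m).
Proof. by split=> // x y _ _; rewrite mulmx1. Qed.
Definition trivn (F : fieldType) (gT : finGroupType) (G : {group gT}) m :=
  MxRepresentation (@trivn_mx_repr F gT G m).

Lemma sum_delta_r (F : fieldType) (I : finType) (c : I) (f : I -> F) :
  \sum_l f l * (l == c)%:R = f c.
Proof.
rewrite (bigD1 c) //= eqxx mulr1 big1 ?addr0 // => l nl.
by rewrite (negbTE nl) mulr0.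
Qed.

Section Core.
Variables (F : fieldType) (gT : finGroupType) (G : {group gT}).
Variables (n : nat) (rV : mx_representation F G n) (B : 'M[F]_n).
Hypotheses (uB : B \in unitmx)
  (hB : {in G, forall x, is_perm_mx (B *m rV x *m invmx B)}).
Variable p : nat.
Hypotheses (charFp : p \in [pchar F]) (habs : abs_p_divisible p rV).

Local Notation to := (pto uB hB).
Local Open Scope group_scope.

Lemma stabP t a : (a \in 'C_G[t | to]) = (a \in G) && (to t a == t).
Proof. by rewrite !inE sub1set inE andbA andbb. Qed.

Definition Hs t := 'C_G[t | to]%G.
Lemma HsP t a : (a \in Hs t) = (a \in G) && (to t a == t).
Proof. exact: stabP. Qed.

Definition Qs t : {group gT} := sval (Sylow_exists p (Hs t)).

Lemma sylQ t : p.-Sylow(Hs t) (Qs t).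
Proof. exact: (svalP (Sylow_exists p (Hs t))). Qed.

Lemma sQH t : Qs t \subset Hs t.
Proof. exact: pHall_sub (sylQ t). Qed.

Lemma sHG t : Hs t \subset G.
Proof. exact: subsetIl. Qed.

Lemma sQG t : Qs t \subset G.
Proof. exact: subset_trans (sQH t) (sHG t). Qed.

Lemma Qfix t g : g \in Qs t -> to t g = t.
Proof.
by move=> /(subsetP (sQH t)); rewrite HsP => /andP[_ /eqP].
Qed.

Lemma prime_p : prime p.
Proof. exact: pcharf_prime charFp. Qed.

Lemma notSyl t : ~~ p.-Sylow(G) (Qs t).
Proof.
apply/negP => /and3P[_ _ pn].
have : (p %| #|G : Qs t|)%N.
  rewrite -(Lagrange_index (sHG t) (sQH t)).
  apply: dvdn_mulr.
  have := orbit_pdiv uB hB charFp habs t.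
  by rewrite card_orbit_in //.
by move=> h; move: pn; rewrite p'natE ?prime_p // h.
Qed.

Lemma cs_neq0 t : (#|Hs t : Qs t|%:R : F) != 0.
Proof.
have /and3P[_ _ pn] := sylQ t.
by rewrite -(dvdn_pcharf charFp) -p'natE ?pn // prime_p.
Qed.

Definition rr t := odflt t [pick j in orbit to G t].

Lemma rr_in t : rr t \in orbit to G t.
Proof.
rewrite /rr; case: pickP => [j jin // | none].
by have := none t; rewrite orbit_refl.
Qed.

Lemma rr_eq t j : j \in orbit to G t -> rr j = rr t.
Proof.
move=> jt; rewrite /rr.
have -> : orbit to G j = orbit to G t by apply/orbit_in_eqP.
by case: pickP => // none; have := none t; rewrite orbit_refl.
Qed.

Lemma rrK t : rr (rr t) = rr t.
Proof. exact: rr_eq (rr_in t). Qed.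

Lemma in_orbit_rr t : t \in orbit to G (rr t).
Proof. by rewrite orbit_in_sym ?rr_in. Qed.

Definition pt t (C : {set gT}) := to t (repr C).

Lemma pt_coset t g c : g \in G -> c \in Qs t :* g -> to t c = to t g.
Proof.
move=> Gg; rewrite mem_rcoset => cg.
have Gc : c * g^-1 \in G := subsetP (sQG t) _ cg.
by rewrite -{1}(mulgKV g c) actMin // (Qfix cg).
Qed.

Lemma ptE t g : g \in G -> pt t (Qs t :* g) = to t g.
Proof. by move=> Gg; rewrite /pt (pt_coset Gg) // mem_repr_rcoset. Qed.


Local Notation NV := #|VF_set G p|.
Local Notation ev := (@enum_val _ (mem (VF_set G p))).

Lemma VF_mem y : y \in VF_set G p -> y.2 \in rcosets y.1 G.
Proof. by rewrite inE => /and5P[]. Qed.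

Lemma VF_memQ t C : C \in rcosets (Qs t) G -> ((Qs t : {set gT}), C) \in VF_set G p.
Proof.
move=> hC; rewrite inE /= hC groupP sQG notSyl andbT /=.
by rewrite andbT (pHall_pgroup (sylQ t)).
Qed.

Definition Kf t (a : 'I_NV) i : F :=
  ((t == rr t) && ((ev a).1 == Qs t) && (pt t (ev a).2 == i))%:R.

Lemma KJ x (a a' : 'I_NV) t i : x \in G -> ev a' = VF_act (ev a) x ->
  Kf t a' (to i x) = Kf t a i.
Proof.
move=> Gx ea'; rewrite /Kf ea' /VF_act /=.
have := VF_mem (enum_valP a); case: (ev a) => Q C /= hC.
case: (t =P rr t) => //= _.
case: (Q =P Qs t) => //= eQ.
move: hC; rewrite eQ => /rcosetsP [g Gg ->].
rewrite -rcosetM !ptE ?groupM // actMin //.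
by rewrite (inj_eq (@act_inj _ _ _ to x)).
Qed.

Lemma Kf_rr t (a : 'I_NV) i : Kf t a i != 0 -> t = rr i.
Proof.
rewrite /Kf; case: (t =P rr t) => [trr|]; last by rewrite andFb eqxx.
case: ((ev a).1 =P Qs t) => [eQ|]; last by rewrite andbF andFb eqxx.
case: (pt t (ev a).2 =P i) => [ept _|]; last by rewrite andbF eqxx.
have := VF_mem (enum_valP a); rewrite eQ => /rcosetsP [g Gg eC].
move: ept; rewrite eC ptE // => ei.
have : i \in orbit to G t by rewrite -ei mem_orbit.
by move/rr_eq => ->.
Qed.

Local Open Scope ring_scope.

Lemma Kf_sq t (a : 'I_NV) i j : Kf t a i * Kf t a j = Kf t a i * (i == j)%:R.
Proof.
rewrite /Kf; case: (t == rr t); last by rewrite /= !mul0r.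
case: ((ev a).1 == Qs t); last by rewrite /= !mul0r.
by case: (pt t (ev a).2 =P i) => [<-|] /=; rewrite ?mul0r.
Qed.

Lemma sum_indicator_in (I : finType) (A : {pred I}) (P : pred I) :
  \sum_(i in A) (P i)%:R = #|[set i in A | P i]|%:R :> F.
Proof.
rewrite -sum_indicator big_mkcond /=.
by apply: eq_bigr => i _; rewrite inE; case: (i \in A).
Qed.

Lemma count_K i : \sum_(a < NV) Kf (rr i) a i = #|Hs (rr i) : Qs (rr i)|%:R.
Proof.
set t := rr i.
have tt : (t == rr t) = true by rewrite /t rrK eqxx.
under eq_bigr do rewrite /Kf tt /=.
rewrite -(big_enum_val (A := mem (VF_set G p))
   (fun y : {set gT} * {set gT} => ((y.1 == Qs t :> {set gT}) && (pt t y.2 == i))%:R)) /=.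
rewrite sum_indicator_in; congr (_ %:R).
set S1 := [set y in _ | _].
set S2 := [set C in rcosets (Qs t) G | pt t C == i].
have -> : S1 = (fun C => ((Qs t : {set gT}), C)) @: S2.
  apply/eqP; rewrite eqEsubset; apply/andP; split; apply/subsetP.
    move=> [Q C]; rewrite inE /= => /andP[yV /andP[/eqP eQ ept]].
    apply/imsetP; exists C; last by rewrite eQ.
    by rewrite inE ept andbT -eQ (VF_mem yV).
  move=> y /imsetP[C]; rewrite inE => /andP[hC ept] ->.
  by rewrite inE /= VF_memQ //= eqxx ept.
rewrite card_imset; last by move=> C C' [].
have : i \in orbit to G t by apply: in_orbit_rr.
case/orbitP => g0 Gg0 ei.
have -> : S2 = (fun D => D :* g0)%g @: rcosets (Qs t) (Hs t).
  apply/eqP; rewrite eqEsubset; apply/andP; split; apply/subsetP.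
    move=> C; rewrite inE => /andP[/rcosetsP[g Gg ->]].
    rewrite ptE // -ei => /eqP eg.
    apply/imsetP; exists (Qs t :* (g * g0^-1))%g.
      apply/rcosetsP; exists (g * g0^-1)%g => //.
      by rewrite HsP groupM ?groupV // andTb actMin ?groupV // eg (@actKin _ _ _ to g0 Gg0).
    by rewrite -rcosetM mulgKV.
  move=> C /imsetP[D /rcosetsP[h hH ->] ->].
  have Gh : h \in G := subsetP (sHG t) _ hH.
  move: hH; rewrite HsP => /andP[_ /eqP th].
  rewrite inE -rcosetM; apply/andP; split.
    by apply/rcosetsP; exists (h * g0)%g; rewrite ?groupM.
  by rewrite ptE ?groupM // actMin // th ei.
rewrite card_imset //.
by move=> D D' e; rewrite -(rcosetK g0 D) e rcosetK.
Qed.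


Definition cs t : F := #|Hs t : Qs t|%:R.
Definition alpha : 'M[F]_(n, NV * n) :=
  \matrix_(i, k) Kf (untidx k).2 (untidx k).1 i.
Definition beta : 'M[F]_(NV * n, n) :=
  \matrix_(k, j) (Kf (untidx k).2 (untidx k).1 j / cs (untidx k).2).

Local Notation Y := (prod_repr (VFG F G p) (@trivn F gT G n)).

Lemma YE x a t b u : x \in G ->
  Y x (tidx a t) (tidx b u) = (VF_act (ev a) x == ev b)%:R * (t == u)%:R.
Proof. by move=> Gx; rewrite /= tprod_entry !mxE. Qed.

Lemma ev_act x (b : 'I_NV) : x \in G -> exists a0 : 'I_NV, ev a0 = VF_act (ev b) x.
Proof.
move=> Gx; exists (enum_rank_in (enum_valP b) (VF_act (ev b) x)).
by rewrite enum_rankK_in // VF_actX // enum_valP.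
Qed.

Lemma VF_act_inj x : injective (fun a : 'I_NV => VF_act (ev a) x).
Proof.
move=> a a'; rewrite /VF_act /=.
case E1: (ev a) => [Q C]; case E2: (ev a') => [Q' C'] /= [eQ eC].
apply: enum_val_inj; rewrite E1 E2 eQ.
by rewrite -(rcosetK x C) eC rcosetK.
Qed.

Lemma eq1 x : x \in G -> Pm rV B x *m alpha = alpha *m Y x.
Proof.
move=> Gx; apply/matrixP => i k; case: (tidxP k) => b u.
rewrite !mxE.
under eq_bigr do rewrite PmEntry //.
rewrite sum_delta !mxE tidxK /= big_tidx.
under eq_bigr do under eq_bigr do rewrite YE // !mxE tidxK /= mulrA.
under eq_bigr do rewrite sum_delta_r.
have [a0 ea0] := ev_act b (groupVr Gx).
have ea0' : VF_act (ev a0) x = ev b.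
  by rewrite ea0 /VF_act /= -rcosetM mulVg rcoset1; case: (ev b).
rewrite (sum_pick _ (k0 := a0) (@VF_act_inj x)) //.
by apply: KJ.
Qed.


Lemma eq2 x : x \in G -> Y x *m beta = beta *m Pm rV B x.
Proof.
move=> Gx; apply/matrixP => k j; case: (tidxP k) => a t.
rewrite !mxE big_tidx.
under eq_bigr do under eq_bigr do rewrite YE // !mxE tidxK /= -mulrA.
under eq_bigr do rewrite -(big_distrr) /=.
under eq_bigr do rewrite sum_delta.
have [a1 ea1] := ev_act a Gx.
under eq_bigr do rewrite eq_sym mulrC.
rewrite (sum_pick (fun b => Kf t b j / cs t) (k0 := a1) (@enum_val_inj _ _)) //.
under eq_bigr do rewrite PmEntry // !mxE tidxK /=.
rewrite (sum_pick _ (k0 := pto uB hB j (x^-1)%g) (@pto_inj _ _ _ _ _ _ uB hB x)); last first.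
  by rewrite pto_K.
congr (_ / _); rewrite -[in LHS](pto_K uB hB j Gx).
by apply: KJ.
Qed.

Lemma eq3 : alpha *m beta = 1%:M.
Proof.
apply/matrixP => i j; rewrite !mxE big_tidx.
under eq_bigr do under eq_bigr do rewrite !mxE tidxK /= mulrA Kf_sq.
have -> : \sum_(a < NV) \sum_(t < n) Kf t a i * (i == j)%:R / cs t =
          \sum_(a < NV) Kf (rr i) a i * (i == j)%:R / cs (rr i).
  apply: eq_bigr => a _; rewrite (bigD1 (rr i)) //= big1 ?addr0 // => t nt.
  case: (Kf t a i =P 0) => [->|/eqP k0]; first by rewrite !mul0r.
  by rewrite (Kf_rr k0) eqxx in nt.
rewrite -big_distrl -big_distrl /= count_K.
case: (i =P j) => [_|_]; last by rewrite !mulr0 mul0r.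
by rewrite mulr1 mulfV // cs_neq0.
Qed.

Lemma hsum_core : hsum rV Y.
Proof.
exists (invmx B *m alpha), (beta *m B); split.
- by move=> x Gx; rewrite mulmxA rVB // -mulmxA eq1 // mulmxA.
- by move=> x Gx; rewrite mulmxA eq2 // -(mulmxA beta B) -BrV // mulmxA.
- by rewrite -mulmxA (mulmxA alpha) eq3 mul1mx mulVmx.
Qed.

End Core.

End MPartE.
Import MPartE.

Theorem theorem2p10 (F : fieldType) (p : nat) (gT : finGroupType) (G : {group gT})
    (charFp : (p \in [pchar F])%R) (n : nat) (rV : mx_representation F G n) :
  perm_module rV -> abs_p_divisible p rV ->
  (forall m (rM : mx_representation F G m),
      V_projective rV rM -> V_projective (VFG F G p) rM) /\
  (forall C : cplx F G,
      endosplit_trivial rV C -> endosplit_trivial (VFG F G p) C).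
Proof.
move=> [B uB hB] habs.
have core := hsum_core uB hB charFp habs.
have partA : forall m (rM : mx_representation F G m),
    V_projective rV rM -> V_projective (VFG F G p) rM.
  move=> m rM [n' [rN hs]].
  exists (n * n')%N, (prod_repr (@trivn F gT G n) rN).
  apply: hsum_iso_summand.
  apply: hsum_trans (iso_summand_hsum hs) _.
  apply: hsum_trans (hsum_tens rN core) _.
  exact: hsum_assoc.
split => // C [pC [D [hD h0 hE [U [W [mU [mW [dx full rs vp]]]]]]]].
split => //; exists D; split => //; exists U, W, mU, mW; split => //.
exact: partA.
Qed.
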